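(* The category of partial magmas (with partial magma homomorphisms) is a regular category.
   Context: A partial magma is a set $A$ with a distinguished element $0$, a subset $A_2\subseteq A\times A$ of summable pairs and a map $+\colon A_2\to A$, such that $(0,a),(a,0)\in A_2$ and $a+0=0+a=a$ for all $a$, and $(a,b)\in A_2$ implies $(b,a)\in A_2$ and $a+b=b+a$. A homomorphism $f\colon A\to B$ of partial magmas is a map with $f(0)=0$, $(f\times f)(A_2)\subseteq B_2$ and $f(a_1+a_2)=f(a_1)+f(a_2)$ for all $(a_1,a_2)\in A_2$. A category is regular if it has finite limits, coequalizers of kernel pairs, and regular epimorphisms are stable under pullback. *)

(* Defs.v *)
From Stdlib Require Import ProofIrrelevance.

Record Category := {
  ob :> Type;
  hom : ob -> ob -> Type;
  idm : forall A, hom A A;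
  comp : forall A B C, hom B C -> hom A B -> hom A C;
  comp_id_l : forall A B (f : hom A B), comp A B B (idm B) f = f;
  comp_id_r : forall A B (f : hom A B), comp A A B f (idm A) = f;
  comp_assoc : forall A B C D (h : hom C D) (g : hom B C) (f : hom A B),
      comp A C D h (comp A B C g f) = comp A B D (comp B C D h g) f
}.
Arguments hom {c} A B.
Arguments idm {c} A.
Arguments comp {c A B C} g f.

Section CatNotions.
Variable C : Category.

Definition is_terminal (T : C) : Prop :=
  forall X : C, exists f : hom X T, forall g : hom X T, g = f.

Definition is_product (A B P : C) (p1 : hom P A) (p2 : hom P B) : Prop :=
  forall (X : C) (x1 : hom X A) (x2 : hom X B),
    exists! u : hom X P, comp p1 u = x1 /\ comp p2 u = x2.

Definition is_equalizer (A B : C) (f g : hom A B) (E : C) (e : hom E A) : Prop :=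
  comp f e = comp g e /\
  forall (X : C) (x : hom X A), comp f x = comp g x ->
    exists! u : hom X E, comp e u = x.

Definition is_pullback (A B Z : C) (f : hom A Z) (g : hom B Z)
    (P : C) (p1 : hom P A) (p2 : hom P B) : Prop :=
  comp f p1 = comp g p2 /\
  forall (X : C) (x1 : hom X A) (x2 : hom X B), comp f x1 = comp g x2 ->
    exists! u : hom X P, comp p1 u = x1 /\ comp p2 u = x2.

Definition is_coequalizer (A B : C) (u v : hom A B) (Q : C) (q : hom B Q) : Prop :=
  comp q u = comp q v /\
  forall (X : C) (x : hom B X), comp x u = comp x v ->
    exists! w : hom Q X, comp w q = x.

Definition has_finite_limits : Prop :=
  (exists T : C, is_terminal T) /\
  (forall A B : C, exists (P : C) (p1 : hom P A) (p2 : hom P B), is_product A B P p1 p2) /\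
  (forall (A B : C) (f g : hom A B), exists (E : C) (e : hom E A), is_equalizer A B f g E e).

Definition has_pullbacks : Prop :=
  forall (A B Z : C) (f : hom A Z) (g : hom B Z),
    exists (P : C) (p1 : hom P A) (p2 : hom P B), is_pullback A B Z f g P p1 p2.

Definition has_coeq_of_kernel_pairs : Prop :=
  forall (A B : C) (f : hom A B) (K : C) (k1 k2 : hom K A),
    is_pullback A A B f f K k1 k2 ->
    exists (Q : C) (q : hom A Q), is_coequalizer K A k1 k2 Q q.

Definition is_regular_epi (B Q : C) (q : hom B Q) : Prop :=
  exists (A : C) (u v : hom A B), is_coequalizer A B u v Q q.

Definition regular_epis_pullback_stable : Prop :=
  forall (A B Z : C) (f : hom A Z) (g : hom B Z) (P : C) (p1 : hom P A) (p2 : hom P B),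
    is_regular_epi A Z f -> is_pullback A B Z f g P p1 p2 ->
    is_regular_epi P B p2.

Definition is_regular_category : Prop :=
  has_finite_limits /\ has_pullbacks /\ has_coeq_of_kernel_pairs /\
  regular_epis_pullback_stable.

End CatNotions.

(** The partial addition is encoded as [padd : A -> A -> option A]:
    (a,b) is summable iff [padd a b <> None], and then a+b is the value. *)
Record PMagma := {
  pm_car :> Type;
  pm_zero : pm_car;
  padd : pm_car -> pm_car -> option pm_car;
  padd_0l : forall a, padd pm_zero a = Some a;
  padd_0r : forall a, padd a pm_zero = Some a;
  padd_comm : forall a b, padd a b = padd b a
}.

Definition summable (A : PMagma) (a b : A) : Prop := padd A a b <> None.

Record PMHom (A B : PMagma) := {
  pmh_fun :> A -> B;
  pmh_zero : pmh_fun (pm_zero A) = pm_zero B;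
  pmh_add : forall a1 a2 s, padd A a1 a2 = Some s ->
      padd B (pmh_fun a1) (pmh_fun a2) = Some (pmh_fun s)
}.
Arguments pmh_fun {A B} p _.

Definition pmh_id (A : PMagma) : PMHom A A.
Proof. refine {| pmh_fun := fun x => x |}; auto. Defined.

Definition pmh_comp (A B D : PMagma) (g : PMHom B D) (f : PMHom A B) : PMHom A D.
Proof.
  refine {| pmh_fun := fun x => g (f x) |}.
  - rewrite (pmh_zero _ _ f); apply pmh_zero.
  - intros a1 a2 s H. apply (pmh_add _ _ g). apply (pmh_add _ _ f). exact H.
Defined.

Lemma pmh_eq (A B : PMagma) (f g : PMHom A B) :
  pmh_fun f = pmh_fun g -> f = g.
Proof.
  destruct f as [f f0 fa], g as [g g0 ga]; simpl; intros ->.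
  rewrite (proof_irrelevance _ f0 g0), (proof_irrelevance _ fa ga). reflexivity.
Qed.

Definition PMagCat : Category.
Proof.
  refine {| ob := PMagma; hom := PMHom; idm := pmh_id; comp := pmh_comp |};
  intros; apply pmh_eq; reflexivity.
Defined.

(* Main.v *)
Require Import Defs.
From Stdlib Require Import ProofIrrelevance FunctionalExtensionality ClassicalEpsilon Classical.

Lemma sig_ext {T : Type} {P : T -> Prop} (x y : {a | P a}) :
  proj1_sig x = proj1_sig y -> x = y.
Proof. destruct x as [x px], y as [y py]; simpl; intros ->; f_equal; apply proof_irrelevance. Qed.

Lemma hom_ext (A B : PMagma) (f g : PMHom A B) : (forall x, f x = g x) -> f = g.
Proof. intro H; apply pmh_eq; apply functional_extensionality; exact H. Qed.

Lemma hom_app (A B : PMagma) (f g : PMHom A B) : f = g -> forall x, f x = g x.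
Proof. intros ->; reflexivity. Qed.

Lemma option_ext {T} (o1 o2 : option T) : (forall s, o1 = Some s <-> o2 = Some s) -> o1 = o2.
Proof.
  destruct o1 as [s1|], o2 as [s2|]; intro H; auto.
  - apply H; reflexivity.
  - destruct (proj1 (H s1) eq_refl); reflexivity.
  - destruct (proj2 (H s2) eq_refl); reflexivity.
Qed.

Definition sub_padd (A : PMagma) (S : A -> Prop) (R : A -> A -> Prop)
  (x y : {a : A | S a}) : option {a : A | S a} :=
  match excluded_middle_informative
    (exists s : {a : A | S a}, R (proj1_sig x) (proj1_sig y) /\
        padd A (proj1_sig x) (proj1_sig y) = Some (proj1_sig s)) with
  | left H => Some (proj1_sig (constructive_indefinite_description _ H))
  | right _ => None
  end.

Lemma sub_padd_spec A S R x y s :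
  sub_padd A S R x y = Some s <->
  (R (proj1_sig x) (proj1_sig y) /\ padd A (proj1_sig x) (proj1_sig y) = Some (proj1_sig s)).
Proof.
  unfold sub_padd. destruct excluded_middle_informative as [H|H].
  - destruct constructive_indefinite_description as [s' [HR Hs']]; simpl.
    split.
    + intro E; injection E; intros <-; auto.
    + intros [_ H']. rewrite Hs' in H'. injection H' as H'. f_equal. apply sig_ext; exact H'.
  - split; intro E. discriminate. exfalso; apply H; exists s; exact E.
Qed.

Definition subPM (A : PMagma) (S : A -> Prop) (R : A -> A -> Prop)
  (S0 : S (pm_zero A)) (R0 : forall a, S a -> R (pm_zero A) a)
  (Rsym : forall a b, R a b -> R b a) : PMagma.
Proof.
  refine {| pm_car := {a : A | S a}; pm_zero := exist _ (pm_zero A) S0;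
            padd := sub_padd A S R |}.
  - intro a. apply sub_padd_spec. simpl. split. apply R0, proj2_sig. apply padd_0l.
  - intro a. apply sub_padd_spec. simpl. split. apply Rsym, R0, proj2_sig. apply padd_0r.
  - intros a b. apply option_ext. intro s. rewrite !sub_padd_spec. rewrite padd_comm.
    split; intros [H1 H2]; split; auto.
Defined.

Definition sub_incl A S R S0 R0 Rsym : PMHom (subPM A S R S0 R0 Rsym) A.
Proof.
  refine {| pmh_fun := fun x : subPM A S R S0 R0 Rsym => proj1_sig x |}.
  - reflexivity.
  - intros a1 a2 s H. apply sub_padd_spec in H. apply H.
Defined.

Definition sub_lift A S R S0 R0 Rsym (X : PMagma) (h : PMHom X A)
  (HS : forall x, S (h x))
  (HR : forall x1 x2 s, padd X x1 x2 = Some s -> R (h x1) (h x2)) :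
  PMHom X (subPM A S R S0 R0 Rsym).
Proof.
  refine {| pmh_fun := fun x => (exist _ (h x) (HS x) : subPM A S R S0 R0 Rsym) |}.
  - apply sig_ext. simpl. apply pmh_zero.
  - intros a1 a2 s H. apply sub_padd_spec; simpl. split. eapply HR; eauto.
    apply pmh_add; exact H.
Defined.

Definition prod_padd (A B : PMagma) (p q : A * B) : option (A * B) :=
  match padd A (fst p) (fst q), padd B (snd p) (snd q) with
  | Some s, Some t => Some (s, t)
  | _, _ => None
  end.

Definition prodPM (A B : PMagma) : PMagma.
Proof.
  refine {| pm_car := (A * B)%type; pm_zero := (pm_zero A, pm_zero B);
            padd := prod_padd A B |}.
  - intros [a b]; unfold prod_padd; simpl; rewrite !padd_0l; reflexivity.
  - intros [a b]; unfold prod_padd; simpl; rewrite !padd_0r; reflexivity.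
  - intros [a b] [c d]; unfold prod_padd; simpl; rewrite (padd_comm A a), (padd_comm B b); reflexivity.
Defined.

Lemma prod_padd_spec (A B : PMagma) (p q s : prodPM A B) :
  padd (prodPM A B) p q = Some s <->
  padd A (fst p) (fst q) = Some (fst s) /\ padd B (snd p) (snd q) = Some (snd s).
Proof.
  simpl; unfold prod_padd. destruct s as [s t]; simpl.
  destruct (padd A (fst p) (fst q)), (padd B (snd p) (snd q)); split; intro H;
    try discriminate; try (destruct H; discriminate).
  injection H; intros -> ->; auto.
  destruct H as [H1 H2]; injection H1; injection H2; intros -> ->; auto.
Qed.

Definition pr1 (A B : PMagma) : PMHom (prodPM A B) A.
Proof.
  refine {| pmh_fun := fun p : prodPM A B => fst p |}. reflexivity.
  intros a1 a2 s H; apply prod_padd_spec in H; apply H.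
Defined.
Definition pr2 (A B : PMagma) : PMHom (prodPM A B) B.
Proof.
  refine {| pmh_fun := fun p : prodPM A B => snd p |}. reflexivity.
  intros a1 a2 s H; apply prod_padd_spec in H; apply H.
Defined.
Definition pairh (X A B : PMagma) (f : PMHom X A) (g : PMHom X B) : PMHom X (prodPM A B).
Proof.
  refine {| pmh_fun := fun x => ((f x, g x) : prodPM A B) |}.
  - simpl; rewrite !pmh_zero; reflexivity.
  - intros a1 a2 s H; apply prod_padd_spec; simpl; split; apply pmh_add; exact H.
Defined.

Definition unitPM : PMagma.
Proof.
  refine {| pm_car := unit; pm_zero := tt; padd := fun _ _ => Some tt |};
  intros; try destruct a; reflexivity.
Defined.

Lemma comp_app (A B C : PMagma) (g : PMHom B C) (f : PMHom A B) x :
  pmh_fun (@comp PMagCat A B C g f) x = g (f x).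
Proof. reflexivity. Qed.

Lemma terminal_ok : is_terminal PMagCat unitPM.
Proof.
  intro X.
  assert (f : PMHom X unitPM).
  { refine {| pmh_fun := fun _ => (tt : unitPM) |}; reflexivity. }
  exists f. intro g. apply hom_ext. intro x. destruct (g x), (f x). reflexivity.
Qed.

Lemma product_ok (A B : PMagma) :
  is_product PMagCat A B (prodPM A B) (pr1 A B) (pr2 A B).
Proof.
  intros X x1 x2. exists (pairh X A B x1 x2). split.
  - split; apply hom_ext; reflexivity.
  - intros u [H1 H2]. apply hom_ext; intro x.
    pose proof (hom_app _ _ _ _ H1 x) as E1. pose proof (hom_app _ _ _ _ H2 x) as E2.
    rewrite comp_app in E1, E2. simpl in *. rewrite <- E1, <- E2. destruct (u x); reflexivity.
Qed.

Definition eqPM (A B : PMagma) (f g : PMHom A B) : PMagma.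
Proof.
  refine (subPM A (fun a => f a = g a) (fun _ _ => True) _ _ _); auto.
  rewrite !pmh_zero; reflexivity.
Defined.

Lemma equalizer_ok (A B : PMagma) (f g : PMHom A B) :
  is_equalizer PMagCat A B f g (eqPM A B f g) (sub_incl _ _ _ _ _ _).
Proof.
  split.
  - apply hom_ext; intro x. apply (proj2_sig x).
  - intros X x Hx.
    assert (HS : forall y, f (x y) = g (x y)).
    { intro y. exact (hom_app _ _ _ _ Hx y). }
    exists (sub_lift _ _ _ _ _ _ X x HS (fun _ _ _ _ => I)). split.
    + apply hom_ext; reflexivity.
    + intros u Hu. apply hom_ext; intro y. apply sig_ext.
      exact (eq_sym (hom_app _ _ _ _ Hu y)).
Qed.

Definition pbPM (A B Z : PMagma) (f : PMHom A Z) (g : PMHom B Z) : PMagma.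
Proof.
  refine (subPM (prodPM A B) (fun p => f (fst p) = g (snd p)) (fun _ _ => True) _ _ _); auto.
  simpl; rewrite !pmh_zero; reflexivity.
Defined.

Definition pb1 A B Z f g : PMHom (pbPM A B Z f g) A :=
  pmh_comp _ _ _ (pr1 A B) (sub_incl _ _ _ _ _ _).
Definition pb2 A B Z f g : PMHom (pbPM A B Z f g) B :=
  pmh_comp _ _ _ (pr2 A B) (sub_incl _ _ _ _ _ _).

Lemma pullback_ok A B Z f g :
  is_pullback PMagCat A B Z f g (pbPM A B Z f g) (pb1 A B Z f g) (pb2 A B Z f g).
Proof.
  split.
  - apply hom_ext; intro x. apply (proj2_sig x).
  - intros X x1 x2 Hx.
    assert (HS : forall y, f (fst (pairh X A B x1 x2 y)) = g (snd (pairh X A B x1 x2 y))).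
    { intro y. exact (hom_app _ _ _ _ Hx y). }
    exists (sub_lift _ _ _ _ _ _ X (pairh X A B x1 x2) HS (fun _ _ _ _ => I)). split.
    + split; apply hom_ext; reflexivity.
    + intros u [H1 H2]. apply hom_ext; intro y. apply sig_ext.
      pose proof (hom_app _ _ _ _ H1 y) as E1. pose proof (hom_app _ _ _ _ H2 y) as E2.
      rewrite comp_app in E1, E2. simpl in *. rewrite <- E1, <- E2.
      symmetry; apply surjective_pairing.
Qed.

Lemma pb_med A B Z f g (P : PMagma) (p1 : PMHom P A) (p2 : PMHom P B) :
  is_pullback PMagCat A B Z f g P p1 p2 ->
  exists phi : PMHom (pbPM A B Z f g) P,
    forall c, p1 (phi c) = fst (proj1_sig c) /\ p2 (phi c) = snd (proj1_sig c).
Proof.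
  intros [_ H]. destruct (H (pbPM A B Z f g) (pb1 A B Z f g) (pb2 A B Z f g))
    as [phi [[E1 E2] _]].
  { apply (proj1 (pullback_ok A B Z f g)). }
  exists phi. intro c. split.
  - exact (hom_app _ _ _ _ E1 c).
  - exact (hom_app _ _ _ _ E2 c).
Qed.

Lemma pb_elems A B Z f g (P : PMagma) (p1 : PMHom P A) (p2 : PMHom P B) :
  is_pullback PMagCat A B Z f g P p1 p2 ->
  forall a b, f a = g b -> exists p, p1 p = a /\ p2 p = b.
Proof.
  intros H a b E. destruct (pb_med _ _ _ _ _ _ _ _ H) as [phi Hphi].
  exists (phi (exist _ (a, b) E : pbPM A B Z f g)). apply Hphi.
Qed.

Definition imPM (A B : PMagma) (f : PMHom A B) : PMagma.
Proof.
  refine (subPM B (fun b => exists a, f a = b)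
    (fun x y => exists a1 a2 s, f a1 = x /\ f a2 = y /\ padd A a1 a2 = Some s) _ _ _).
  - exists (pm_zero A); apply pmh_zero.
  - intros b [a <-]. exists (pm_zero A), a, a. split. apply pmh_zero. split. reflexivity. apply padd_0l.
  - intros x y [a1 [a2 [s [H1 [H2 H3]]]]]. exists a2, a1, s. rewrite padd_comm. auto.
Defined.

Definition im_q A B f : PMHom A (imPM A B f).
Proof.
  refine (sub_lift _ _ _ _ _ _ A f (fun a => ex_intro _ a eq_refl) _).
  intros x1 x2 s H. exists x1, x2, s. auto.
Defined.

Definition SS (A Q : PMagma) (q : PMHom A Q) : Prop :=
  (forall y, exists a, q a = y) /\
  (forall y1 y2 s, padd Q y1 y2 = Some s ->
     exists a1 a2 t, q a1 = y1 /\ q a2 = y2 /\ padd A a1 a2 = Some t).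

Lemma im_q_SS A B f : SS A (imPM A B f) (im_q A B f).
Proof.
  split.
  - intros [b [a Ha]]. exists a. apply sig_ext. exact Ha.
  - intros y1 y2 s H. apply sub_padd_spec in H. destruct H as [[a1 [a2 [t [H1 [H2 H3]]]]] _].
    exists a1, a2, t. split. apply sig_ext; exact H1. split. apply sig_ext; exact H2. exact H3.
Qed.

Lemma SS_factor (A Q X : PMagma) (q : PMHom A Q) (x : PMHom A X) :
  SS A Q q -> (forall a a', q a = q a' -> x a = x a') ->
  exists! w : PMHom Q X, @comp PMagCat A Q X w q = x.
Proof.
  intros [Hsurj Hlift] Hx.
  pose (pre := fun y => proj1_sig (constructive_indefinite_description _ (Hsurj y))).
  assert (Hpre : forall y, q (pre y) = y).
  { intro y. unfold pre. destruct constructive_indefinite_description; assumption. }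
  assert (Z0 : x (pre (pm_zero Q)) = pm_zero X).
  { rewrite <- (pmh_zero _ _ x). apply Hx. rewrite Hpre, pmh_zero. reflexivity. }
  assert (Ad : forall y1 y2 s, padd Q y1 y2 = Some s ->
            padd X (x (pre y1)) (x (pre y2)) = Some (x (pre s))).
  { intros y1 y2 s H. destruct (Hlift _ _ _ H) as [a1 [a2 [t [H1 [H2 H3]]]]].
    pose proof (pmh_add _ _ q _ _ _ H3) as Hq. rewrite H1, H2, H in Hq.
    injection Hq as Hq.
    rewrite (Hx (pre y1) a1), (Hx (pre y2) a2), (Hx (pre s) t).
    + apply pmh_add; exact H3.
    + rewrite Hpre; auto.
    + rewrite Hpre; auto.
    + rewrite Hpre; auto. }
  exists (Build_PMHom Q X (fun y => x (pre y)) Z0 Ad). split.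
  - apply hom_ext; intro a. rewrite comp_app; simpl. apply Hx. apply Hpre.
  - intros w Hw. apply hom_ext; intro y. simpl. symmetry.
    transitivity (pmh_fun (@comp PMagCat _ _ _ w q) (pre y)).
    + rewrite comp_app, Hpre. reflexivity.
    + rewrite Hw. reflexivity.
Qed.

Lemma regepi_SS (B Q : PMagma) (q : PMHom B Q) :
  is_regular_epi PMagCat B Q q -> SS B Q q.
Proof.
  intros [A0 [u [v [Hc Hu]]]].
  pose (I := imPM B Q q). pose (q' := im_q B Q q).
  pose (m := sub_incl _ _ _ _ _ _ : PMHom I Q).
  assert (Hq' : @comp PMagCat _ _ _ q' u = @comp PMagCat _ _ _ q' v).
  { apply hom_ext; intro a. apply sig_ext. exact (hom_app _ _ _ _ Hc a). }
  destruct (Hu I q' Hq') as [w [Hw _]].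
  destruct (Hu Q q Hc) as [w0 [_ Huniq]].
  assert (Hmw : forall y, proj1_sig (w y) = y).
  { intro y. assert (E : @comp PMagCat _ _ _ m w = @idm PMagCat Q).
    { rewrite <- (Huniq (@comp PMagCat _ _ _ m w)), <- (Huniq (@idm PMagCat Q)); auto.
      - apply hom_ext; reflexivity.
      - apply hom_ext; intro b. rewrite !comp_app. simpl.
        pose proof (hom_app _ _ _ _ Hw b) as E. rewrite comp_app in E. rewrite E. reflexivity. }
    exact (hom_app _ _ _ _ E y). }
  split.
  - intro y. destruct (proj2_sig (w y)) as [a Ha]. exists a. rewrite Ha. apply Hmw.
  - intros y1 y2 s H. pose proof (pmh_add _ _ w _ _ _ H) as H'.
    apply sub_padd_spec in H'. destruct H' as [[a1 [a2 [t [H1 [H2 H3]]]]] _].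
    exists a1, a2, t. rewrite H1, H2, !Hmw. auto.
Qed.

Lemma coeq_lemma (K A Q : PMagma) (k1 k2 : PMHom K A) (q : PMHom A Q) :
  SS A Q q -> @comp PMagCat _ _ _ q k1 = @comp PMagCat _ _ _ q k2 ->
  (forall a a', q a = q a' -> exists k, k1 k = a /\ k2 k = a') ->
  is_coequalizer PMagCat K A k1 k2 Q q.
Proof.
  intros HS Hc Hk. split; auto.
  intros X x Hx. apply SS_factor; auto.
  intros a a' E. destruct (Hk a a' E) as [k [<- <-]].
  exact (hom_app _ _ _ _ Hx k).
Qed.

Theorem mainTheorem2 : is_regular_category PMagCat.
Proof.
  split; [|split; [|split]].
  - split; [|split].
    + exists unitPM; apply terminal_ok.
    + intros A B. exists (prodPM A B), (pr1 A B), (pr2 A B). apply product_ok.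
    + intros A B f g. exists (eqPM A B f g), (sub_incl _ _ _ _ _ _). apply equalizer_ok.
  - intros A B Z f g. exists (pbPM A B Z f g), (pb1 A B Z f g), (pb2 A B Z f g).
    apply pullback_ok.
  - intros A B f K k1 k2 Hpb. exists (imPM A B f), (im_q A B f).
    apply coeq_lemma.
    + apply im_q_SS.
    + apply hom_ext; intro k. apply sig_ext. exact (hom_app _ _ _ _ (proj1 Hpb) k).
    + intros a a' E. apply (pb_elems _ _ _ _ _ _ _ _ Hpb).
      exact (f_equal (@proj1_sig _ _) E).
  - intros A B Z f g P p1 p2 Hf Hpb.
    apply regepi_SS in Hf. destruct Hf as [Hsurj Hlift].
    exists (pbPM P P B p2 p2), (pb1 _ _ _ p2 p2), (pb2 _ _ _ p2 p2).
    apply coeq_lemma.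
    + split.
      * intro b. destruct (Hsurj (g b)) as [a Ha].
        destruct (pb_elems _ _ _ _ _ _ _ _ Hpb a b Ha) as [p [_ Hp]]. eauto.
      * intros b1 b2 s H. pose proof (pmh_add _ _ g _ _ _ H) as Hg.
        destruct (Hlift _ _ _ Hg) as [a1 [a2 [t [H1 [H2 H3]]]]].
        pose proof (pmh_add _ _ f _ _ _ H3) as Hft. rewrite H1, H2, Hg in Hft.
        injection Hft as Hft.
        destruct (pb_med _ _ _ _ _ _ _ _ Hpb) as [phi Hphi].
        pose (c1 := exist _ (a1, b1) H1 : pbPM A B Z f g).
        pose (c2 := exist _ (a2, b2) H2 : pbPM A B Z f g).
        pose (c := exist _ (t, s) (eq_sym Hft) : pbPM A B Z f g).
        assert (Hc : padd (pbPM A B Z f g) c1 c2 = Some c).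
        { apply sub_padd_spec. split. exact I. apply prod_padd_spec; simpl; auto. }
        exists (phi c1), (phi c2), (phi c). split; [|split].
        -- apply (Hphi c1).
        -- apply (Hphi c2).
        -- apply pmh_add; exact Hc.
    + apply (proj1 (pullback_ok _ _ _ _ _)).
    + apply (pb_elems _ _ _ _ _ _ _ _ (pullback_ok _ _ _ p2 p2)).
Qed.
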